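(* Let $\overrightarrow{C}$ be an oriented 2-regular graph with at least two cycle components, each of which is either unidirectional or $\Theta$-oriented. Then $\overrightarrow{C}$ is $\{1\}$-antimagic if and only if at most one of its cycle components is $\Theta$-oriented (and all others are unidirectional).
   Context: An oriented graph is a simple graph each of whose edges is given one direction (an arc $(u,v)$ goes from $u$ to $v$). For vertices $u,v$, $d(u,v)$ is the length of a shortest directed path from $u$ to $v$ ($d(u,u)=0$, $\infty$ if no path). For a set $D$ of nonnegative integers, $N_D(v)=\{y : d(v,y)\in D\}$; for a bijection $f:V\to\{1,\dots,|V|\}$, $\omega_D(v)=\sum_{x\in N_D(v)}f(x)$ (empty sum $0$); $f$ is $D$-antimagic if distinct vertices have distinct $D$-weights, and the graph is $D$-antimagic if such an $f$ exists. An oriented 2-regular graph is an orientation of a disjoint union of cycles, each of length at least $3$. A cycle component on $v_1,\dots,v_n$ is unidirectional if (up to relabeling) its arcs are $(v_i,v_{i+1})$, $1\le i\le n-1$, and $(v_n,v_1)$; it is $\Theta$-oriented if it has exactly one source (in-degree $0$) and exactly one sink (out-degree $0$) and these are adjacent, i.e. up to relabeling its arcs are $(v_i,v_{i+1})$, $1\le i\le n-1$, and $(v_1,v_n)$. *)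

(* Defs.v *)
From mathcomp Require Import all_boot.
Set Implicit Arguments. Unset Strict Implicit. Unset Printing Implicit Defensive.

Section Defs.
Variable V : finType.
Variable a : rel V.  (* arc relation: a u v means arc (u,v) *)

Definition oriented : Prop :=
  (forall x, ~~ a x x) /\ (forall x y, a x y -> ~~ a y x).

Definition und : rel V := fun x y => a x y || a y x.

Definition two_regular : Prop := forall x, #|[set y | und x y]| = 2.

Definition comp (x : V) : {set V} := [set y | connect und x y].
Definition components : {set {set V}} := [set comp x | x in V].

Definition path_arc (s : seq V) (x y : V) : Prop :=
  exists i, i.+1 < size s /\ nth x s i = x /\ nth x s i.+1 = y.

Definition unidirectional (C : {set V}) : Prop :=
  exists s : seq V, [/\ uniq s, 3 <= size s, (forall x, x \in C <-> x \in s) &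
    forall x y, x \in C -> y \in C ->
      (a x y <-> path_arc s x y \/ (x = last x s /\ y = head x s))].

Definition theta_oriented (C : {set V}) : Prop :=
  exists s : seq V, [/\ uniq s, 3 <= size s, (forall x, x \in C <-> x \in s) &
    forall x y, x \in C -> y \in C ->
      (a x y <-> path_arc s x y \/ (x = head x s /\ y = last x s))].

Fixpoint reach (k : nat) (u v : V) : bool :=
  if k is k'.+1 then [exists w, a u w && reach k' w v] else u == v.

Definition dist_is (u v : V) (k : nat) : bool :=
  reach k u v && [forall j : 'I_k, ~~ reach j u v].

(* N_D(v) = { y | d(v,y) \in D }; finite distances are < #|V| *)
Definition ND (D : pred nat) (v : V) : {set V} :=
  [set y | [exists k : 'I_#|V|, (D k) && dist_is v y k]].

Definition weight (D : pred nat) (f : V -> nat) (v : V) : nat :=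
  \sum_(x in ND D v) f x.

Definition labeling (f : V -> nat) : Prop :=
  injective f /\ (forall x, 1 <= f x <= #|V|) /\
  (forall k, 1 <= k <= #|V| -> exists x, f x = k).

Definition D_antimagic (D : pred nat) : Prop :=
  exists f, labeling f /\ injective (weight D f).

End Defs.

(* Main.v *)
Require Import Defs.
From mathcomp Require Import all_boot.
From mathcomp Require Import zify.
From Stdlib Require Import Classical.
Set Implicit Arguments. Unset Strict Implicit. Unset Printing Implicit Defensive.

Definition Out (V : finType) (a : rel V) (v : V) : {set V} := [set y | a v y].

Lemma ND1 (V : finType) (a : rel V) (v : V) :
  1 < #|V| -> oriented a -> ND a (pred1 1) v = Out a v.
Proof.
move=> HN [Hirr _]; apply/setP => y; rewrite !inE.
apply/existsP/idP.
- case=> k /andP [/eqP Hk]; rewrite /dist_is Hk => /andP [] /=.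
  by move=> /existsP [w /andP [Hw /eqP <-]] _.
- move=> Hy; exists (Ordinal HN); rewrite /dist_is /=.
  apply/andP; split; first by apply/existsP; exists y; rewrite Hy eqxx.
  apply/forallP => -[[|j] Hj] //=.
  apply/eqP => Evy; move: (Hirr v); by rewrite {2}Evy Hy.
Qed.

Lemma und_sym (V : finType) (a : rel V) : symmetric (und a).
Proof. by move=> x y; rewrite /und orbC. Qed.

Lemma comp_eq (V : finType) (a : rel V) x y : y \in Defs.comp a x -> Defs.comp a y = Defs.comp a x.
Proof.
rewrite inE => Hxy; apply/setP => z; rewrite !inE.
by rewrite (same_connect (sym_connect_sym (und_sym a)) Hxy).
Qed.

Lemma comp_self (V : finType) (a : rel V) x : x \in Defs.comp a x.
Proof. by rewrite inE connect0. Qed.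

Lemma comp_of (V : finType) (a : rel V) C x :
  C \in components a -> x \in C -> C = Defs.comp a x.
Proof. by move=> /imsetP [x0 _ ->] Hx; rewrite (comp_eq Hx). Qed.

Lemma arc_comp (V : finType) (a : rel V) x y : a x y -> y \in Defs.comp a x.
Proof. by move=> H; rewrite inE; apply: connect1; rewrite /und H. Qed.

Lemma comp_in (V : finType) (a : rel V) x : Defs.comp a x \in components a.
Proof. exact: imset_f. Qed.

Lemma pa_iff (V : finType) (s : seq V) (v y x0 : V) : uniq s -> v \in s ->
  (path_arc s v y <-> (index v s).+1 < size s /\ y = nth x0 s (index v s).+1).
Proof.
move=> Us vs; split.
- case=> j [Hj [Hv Hy]].
  have Ej : index v s = j by rewrite -{1}Hv index_uniq // ltnW.
  by rewrite Ej; split => //; rewrite -Hy (set_nth_default x0).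
- case=> Hi Hy; exists (index v s); split => //; split; first exact: nth_index.
  by rewrite Hy (set_nth_default x0).
Qed.

Lemma last_idx (V : finType) (s : seq V) (v : V) : uniq s -> v \in s ->
  (v = last v s <-> (index v s).+1 = size s).
Proof.
move=> Us vs; have n0 : 0 < size s by case: s Us vs.
rewrite -nth_last; split.
- move=> E; have Hl : (size s).-1 < size s by rewrite ltn_predL.
  have := index_uniq v Hl Us; rewrite -E => ->.
  by rewrite prednK.
- move=> E; have -> : (size s).-1 = index v s by rewrite -E.
  by rewrite nth_index.
Qed.

Lemma head_idx (V : finType) (s : seq V) (v : V) : uniq s -> v \in s ->
  (v = head v s <-> index v s = 0).
Proof.
move=> Us vs; have n0 : 0 < size s by case: s Us vs.
have Hh : head v s = nth v s 0 by case: s {Us vs n0}.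
rewrite Hh; split.
- by move=> E; have := index_uniq v n0 Us; rewrite -E.
- by move=> E; rewrite -{1}E nth_index.
Qed.

Lemma idx_eq (V : finType) (s : seq V) (u v : V) : u \in s -> v \in s ->
  index u s = index v s -> u = v.
Proof. by move=> us vs E; rewrite -(nth_index u us) E (set_nth_default v) ?index_mem // nth_index. Qed.

Lemma arc_in (V : finType) (a : rel V) C (s : seq V) v y :
  C \in components a -> (forall x, x \in C <-> x \in s) -> v \in C -> a v y -> y \in s.
Proof.
move=> HC Hm vC Hay; apply/Hm; rewrite (comp_of HC vC); exact: arc_comp.
Qed.

Lemma uni_single (V : finType) (a : rel V) C v :
  C \in components a -> unidirectional a C -> v \in C -> exists x, Out a v = [set x].
Proof.
move=> HC [s [Us Hs3 Hm Hs]] vC.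
have vs : v \in s by apply/Hm.
have Hy := arc_in HC Hm vC.
case: (ltnP (index v s).+1 (size s)) => Hi.
- exists (nth v s (index v s).+1); apply/setP => y; rewrite !inE; apply/idP/eqP.
  + move=> Hay; have ys := Hy _ Hay.
    have [H1 _] := Hs v y vC (proj2 (Hm y) ys).
    case: (H1 Hay).
    * by move/(pa_iff _ v Us vs) => [_ ->].
    * by case=> /(last_idx Us vs) E _; rewrite E ltnn in Hi.
  + move=> ->; have ys : nth v s (index v s).+1 \in s by exact: mem_nth.
    apply/(Hs v _ vC (proj2 (Hm _) ys)); left; exact/(pa_iff _ v Us vs).
- have hs : head v s \in s by move: vs; case: (s) => //= x t _; rewrite mem_head.
  exists (head v s); apply/setP => y; rewrite !inE; apply/idP/eqP.
  + move=> Hay; have ys := Hy _ Hay.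
    have [H1 _] := Hs v y vC (proj2 (Hm y) ys).
    case: (H1 Hay).
    * by move/(pa_iff _ v Us vs) => [Hi' _]; rewrite ltnNge Hi in Hi'.
    * by case.
  + move=> ->; apply/(Hs v _ vC (proj2 (Hm _) hs)); right; split => //.
    apply/(last_idx Us vs); have := index_mem v s; rewrite vs => H; apply/eqP; by rewrite eqn_leq H Hi.
Qed.

Section Th.
Lemma theta_head (V : finType) (a : rel V) C (s : seq V) v :
  C \in components a -> uniq s -> 3 <= size s -> (forall x, x \in C <-> x \in s) ->
  (forall x y, x \in C -> y \in C ->
      (a x y <-> path_arc s x y \/ (x = head x s /\ y = last x s))) ->
  v \in C -> index v s = 0 ->
  Out a v = [set nth v s 1; nth v s (size s).-1] /\ nth v s 1 != nth v s (size s).-1.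
Proof.
move=> HC Us Hs3 Hm Hs vC Hi0.
have vs : v \in s by apply/Hm.
have Hy := arc_in HC Hm vC.
have h1 : 1 < size s by lia.
have h2 : (size s).-1 < size s by lia.
split; last by rewrite nth_uniq //; apply/eqP; lia.
apply/setP => y; rewrite !inE; apply/idP/orP.
- move=> Hay; have ys := Hy _ Hay.
  have [H1 _] := Hs v y vC (proj2 (Hm y) ys).
  case: (H1 Hay).
  + by move/(pa_iff _ v Us vs) => [_ ->]; left; rewrite Hi0.
  + by case=> _ ->; right; rewrite nth_last.
- case=> /eqP ->.
  + have ys : nth v s 1 \in s by apply: mem_nth.
    apply/(Hs v _ vC (proj2 (Hm _) ys)); left; apply/(pa_iff _ v Us vs).
    by rewrite Hi0; split => //; lia.
  + have ys : nth v s (size s).-1 \in s by apply: mem_nth.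
    apply/(Hs v _ vC (proj2 (Hm _) ys)); right; split; first exact/(head_idx Us vs).
    by rewrite nth_last.
Qed.

Lemma theta_last (V : finType) (a : rel V) C (s : seq V) v :
  C \in components a -> uniq s -> 3 <= size s -> (forall x, x \in C <-> x \in s) ->
  (forall x y, x \in C -> y \in C ->
      (a x y <-> path_arc s x y \/ (x = head x s /\ y = last x s))) ->
  v \in C -> (index v s).+1 = size s -> Out a v = set0.
Proof.
move=> HC Us Hs3 Hm Hs vC Hi.
have vs : v \in s by apply/Hm.
have Hy := arc_in HC Hm vC.
apply/setP => y; rewrite !inE; apply/negbTE/negP => Hay.
have ys := Hy _ Hay.
have [H1 _] := Hs v y vC (proj2 (Hm y) ys).
case: (H1 Hay).
+ by move/(pa_iff _ v Us vs) => [H _]; rewrite Hi ltnn in H.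
+ by case=> /(head_idx Us vs) H _; rewrite H in Hi; lia.
Qed.

Lemma theta_mid (V : finType) (a : rel V) C (s : seq V) v :
  C \in components a -> uniq s -> 3 <= size s -> (forall x, x \in C <-> x \in s) ->
  (forall x y, x \in C -> y \in C ->
      (a x y <-> path_arc s x y \/ (x = head x s /\ y = last x s))) ->
  v \in C -> index v s != 0 -> (index v s).+1 < size s ->
  Out a v = [set nth v s (index v s).+1].
Proof.
move=> HC Us Hs3 Hm Hs vC Hi0 Hi.
have vs : v \in s by apply/Hm.
have Hy := arc_in HC Hm vC.
apply/setP => y; rewrite !inE; apply/idP/eqP.
- move=> Hay; have ys := Hy _ Hay.
  have [H1 _] := Hs v y vC (proj2 (Hm y) ys).
  case: (H1 Hay).
  + by move/(pa_iff _ v Us vs) => [_ ->].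
  + by case=> /(head_idx Us vs) H _; rewrite H in Hi0.
- move=> ->; have ys : nth v s (index v s).+1 \in s by exact: mem_nth.
  apply/(Hs v _ vC (proj2 (Hm _) ys)); left; exact/(pa_iff _ v Us vs).
Qed.
End Th.

Lemma nth_succ_inj (V : finType) (s : seq V) (x0 : V) i j : uniq s ->
  i.+1 < size s -> j.+1 < size s -> nth x0 s i.+1 = nth x0 s j.+1 -> i = j.
Proof. by move=> Us Hi Hj /eqP; rewrite nth_uniq // eqSS => /eqP. Qed.

Lemma pair_not_single (V : finType) (m l x : V) : m != l -> [set m; l] != [set x].
Proof.
move=> Hml; apply/eqP => E.
have : m \in [set x] by rewrite -E !inE eqxx.
have : l \in [set x] by rewrite -E !inE eqxx orbT.
rewrite !inE => /eqP El /eqP Em; by rewrite El Em eqxx in Hml.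
Qed.

Lemma in_collision (V : finType) (a : rel V) :
  (forall C, C \in components a -> unidirectional a C \/ theta_oriented a C) ->
  forall u v y, a u y -> a v y -> u != v ->
  (forall x, Out a u != [set x]) \/ (forall x, Out a v != [set x]).
Proof.
move=> Hcl u v y Huy Hvy Huv.
have HC := comp_in a y.
have uC : u \in Defs.comp a y by rewrite (comp_eq (arc_comp Huy)) comp_self.
have vC : v \in Defs.comp a y by rewrite (comp_eq (arc_comp Hvy)) comp_self.
have yC := comp_self a y.
case: (Hcl _ HC) => [[s [Us Hs3 Hm Hs]] | [s [Us Hs3 Hm Hs]]].
- have us : u \in s by apply/Hm.
  have vs : v \in s by apply/Hm.
  have ys : y \in s by apply/Hm.
  have hy : head v s = nth y s 0 by case: (s) Hs3.
  have s0 : 0 < size s by case: (s) Hs3.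
  case: ((Hs u y uC yC).1 Huy); case: ((Hs v y vC yC).1 Hvy).
  + move/(pa_iff _ y Us vs) => [Hv Ev] /(pa_iff _ y Us us) [Hu Eu].
    have E := nth_succ_inj Us Hu Hv (etrans (esym Eu) Ev).
    by rewrite (idx_eq us vs E) eqxx in Huv.
  + case=> _ Ey /(pa_iff _ y Us us) [Hu Eu].
    have E : nth y s (index u s).+1 == nth y s 0 by rewrite -Eu {1}Ey hy.
    move: E; rewrite nth_uniq //; lia.
  + move/(pa_iff _ y Us vs) => [Hv Ev] [_ Ey].
    have hu : head u s = nth y s 0 by case: (s) Hs3.
    have E : nth y s (index v s).+1 == nth y s 0 by rewrite -Ev {1}Ey hu.
    move: E; rewrite nth_uniq //; lia.
  + case=> /(last_idx Us vs) Ev _ [/(last_idx Us us) Eu _].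
    have E : index u s = index v s by lia.
    by rewrite (idx_eq us vs E) eqxx in Huv.
- have us : u \in s by apply/Hm.
  have vs : v \in s by apply/Hm.
  case: ((Hs u y uC yC).1 Huy); case: ((Hs v y vC yC).1 Hvy).
  + move/(pa_iff _ y Us vs) => [Hv Ev] /(pa_iff _ y Us us) [Hu Eu].
    have E := nth_succ_inj Us Hu Hv (etrans (esym Eu) Ev).
    by rewrite (idx_eq us vs E) eqxx in Huv.
  + case=> /(head_idx Us vs) H0 _ _; right => x.
    have [-> Hne] := theta_head HC Us Hs3 Hm Hs vC H0.
    exact: pair_not_single.
  + move=> _ [/(head_idx Us us) H0 _]; left => x.
    have [-> Hne] := theta_head HC Us Hs3 Hm Hs uC H0.
    exact: pair_not_single.
  + move=> _ [/(head_idx Us us) H0 _]; left => x.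
    have [-> Hne] := theta_head HC Us Hs3 Hm Hs uC H0.
    exact: pair_not_single.
Qed.

Lemma lab_of (V : finType) (h h' : nat -> nat) :
  (forall k, k < #|V| -> h k < #|V|) -> (forall k, k < #|V| -> h' k < #|V|) ->
  (forall k, h (h' k) = k) -> injective h ->
  labeling (fun x : V => (h (enum_rank x)).+1).
Proof.
move=> Hh Hh' Hhh Hinj; split; [|split].
- by move=> x y [] /Hinj /val_inj /enum_rank_inj.
- by move=> x; rewrite /= Hh.
- move=> k Hk; have Hk1 : h' k.-1 < #|V| by apply: Hh'; lia.
  exists (enum_val (Ordinal Hk1)); rewrite enum_valK /= Hhh; lia.
Qed.

Definition swp (i j k : nat) := if k == i then j else if k == j then i else k.

Lemma swpK i j : involutive (swp i j).
Proof. by move=> k; rewrite /swp; do ! case: eqP => //=; lia. Qed.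

Lemma swp_lt i j N k : i < N -> j < N -> k < N -> swp i j k < N.
Proof. by rewrite /swp; do ! case: eqP. Qed.

Lemma exists_lab (V : finType) (m l : V) : m != l -> 1 < #|V| ->
  exists f, labeling f /\ f m = #|V| /\ f l = #|V|.-1.
Proof.
move=> Hml HN.
have Er : forall x : V, enum_rank x < #|V| by move=> x; exact: ltn_ord.
set p := swp #|V|.-1 (enum_rank m).
set q := swp #|V|.-2 (p (enum_rank l)).
have Hp : forall k, k < #|V| -> p k < #|V| by move=> k Hk; apply: swp_lt => //; lia.
have Hq : forall k, k < #|V| -> q k < #|V|.
  by move=> k Hk; apply: swp_lt => //; [lia | apply: Hp].
have Hml' : (enum_rank m : nat) != enum_rank l.
  by apply/negP => /eqP /val_inj /enum_rank_inj E; rewrite E eqxx in Hml.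
exists (fun x => (q (p (enum_rank x))).+1); split; [|split].
- apply: (@lab_of V (fun k => q (p k)) (fun k => p (q k))).
  + by move=> k Hk; apply/Hq/Hp.
  + by move=> k Hk; apply/Hp/Hq.
  + by move=> k; rewrite /q /p !swpK.
  + by move=> x y /= /(can_inj (swpK _ _)) /(can_inj (swpK _ _)).
- rewrite /q /p /swp eqxx.
  have := Er m; have := Er l.
  move: Hml'; do ! case: eqP => /=; lia.
- rewrite /q /swp eqxx.
  have := Er m; have := Er l.
  move: Hml'; rewrite /p /swp; do ! case: eqP => /=; lia.
Qed.

Lemma W_out (V : finType) (a : rel V) f v : 1 < #|V| -> oriented a ->
  weight a (pred1 1) f v = \sum_(x in Out a v) f x.
Proof. by move=> HN Hor; rewrite /weight ND1. Qed.

Lemma W_single (V : finType) (a : rel V) f v x : 1 < #|V| -> oriented a ->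
  Out a v = [set x] -> weight a (pred1 1) f v = f x.
Proof. by move=> HN Hor E; rewrite W_out // E big_set1. Qed.

Lemma W_pair (V : finType) (a : rel V) f v x y : 1 < #|V| -> oriented a ->
  Out a v = [set x; y] -> x != y -> weight a (pred1 1) f v = f x + f y.
Proof.
move=> HN Hor E Hxy; rewrite W_out // E big_setU1 ?big_set1 //.
by rewrite inE.
Qed.

Lemma W_empty (V : finType) (a : rel V) f v : 1 < #|V| -> oriented a ->
  Out a v = set0 -> weight a (pred1 1) f v = 0.
Proof. by move=> HN Hor E; rewrite W_out // E big_set0. Qed.

Lemma ss_inj (V : finType) (a : rel V) f u v x x' :
  (forall C, C \in components a -> unidirectional a C \/ theta_oriented a C) ->
  1 < #|V| -> oriented a -> injective f ->
  Out a u = [set x] -> Out a v = [set x'] ->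
  weight a (pred1 1) f u = weight a (pred1 1) f v -> u = v.
Proof.
move=> Hcl HN Hor Hf Eu Ev.
rewrite (W_single _ HN Hor Eu) (W_single _ HN Hor Ev) => /Hf Exx.
case: (eqVneq u v) => // Huv.
have Hux : a u x by move: (set11 x); rewrite -Eu inE.
have Hvx : a v x by move: (set11 x'); rewrite -Ev inE Exx.
case: (in_collision Hcl Hux Hvx Huv) => H.
- by move: (H x); rewrite Eu eqxx.
- by move: (H x'); rewrite Ev eqxx.
Qed.

Lemma exists_idx (V : finType) (s : seq V) i : uniq s -> i < size s ->
  exists v, v \in s /\ index v s = i.
Proof.
move=> Us Hi; case: s Us Hi => [|x t] // Us Hi.
by exists (nth x (x :: t) i); rewrite mem_nth // index_uniq.
Qed.

Theorem mainTheorem17 (V : finType) (a : rel V) :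
  oriented a -> two_regular a ->
  2 <= #|components a| ->
  (forall C, C \in components a -> unidirectional a C \/ theta_oriented a C) ->
  (D_antimagic a (pred1 1) <->
   forall C1 C2, C1 \in components a -> C2 \in components a ->
     theta_oriented a C1 -> theta_oriented a C2 -> C1 = C2).
Proof.
move=> Hor Hreg Hcard Hcl.
have HN : 1 < #|V| := leq_trans Hcard (leq_imset_card _ _).
split.
- case=> f [Hf Hinj] C1 C2 H1 H2 [s1 [U1 S1 M1 T1]] [s2 [U2 S2 M2 T2]].
  have [l1 [l1s Hl1]] : exists v, v \in s1 /\ index v s1 = (size s1).-1.
    by apply: exists_idx => //; lia.
  have [l2 [l2s Hl2]] : exists v, v \in s2 /\ index v s2 = (size s2).-1.
    by apply: exists_idx => //; lia.
  have l1C : l1 \in C1 by apply/M1.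
  have l2C : l2 \in C2 by apply/M2.
  have O1 := theta_last H1 U1 S1 M1 T1 l1C (ltac:(lia)).
  have O2 := theta_last H2 U2 S2 M2 T2 l2C (ltac:(lia)).
  have E : l1 = l2.
    by apply: Hinj; rewrite (W_empty f HN Hor O1) (W_empty f HN Hor O2).
  by rewrite (comp_of H1 l1C) (comp_of H2 l2C) E.
- move=> Huniq.
  case: (classic (exists C, C \in components a /\ theta_oriented a C)).
  + case=> C0 [HC0 [s [Us Hs3 Hm Hs]]].
    have [h [hs Hh]] : exists v, v \in s /\ index v s = 0.
      by apply: exists_idx => //; lia.
    have hC : h \in C0 by apply/Hm.
    have [Oh Hml] := theta_head HC0 Us Hs3 Hm Hs hC Hh.
    set m := nth h s 1 in Oh Hml.
    set l := nth h s (size s).-1 in Oh Hml.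
    have s0 : 0 < size s := ltnW (ltnW Hs3).
    have ls : l \in s by rewrite /l mem_nth // ltn_predL.
    have lC : l \in C0 by apply/Hm.
    have Hl : index l s = (size s).-1 by rewrite /l index_uniq // ltn_predL.
    have Ol := theta_last HC0 Us Hs3 Hm Hs lC (ltac:(by rewrite Hl prednK)).
    have cls : forall v, v = h \/ v = l \/ exists x, Out a v = [set x].
      move=> v; case: (boolP (v \in C0)) => vC.
      * have vs : v \in s by apply/Hm.
        have := index_mem v s; rewrite vs => Hvi.
        case: (eqVneq (index v s) 0) => Hv0.
          by left; apply: (@idx_eq _ s) => //; rewrite Hv0 Hh.
        case: (eqVneq (index v s).+1 (size s)) => Hv1.
          by right; left; apply: (@idx_eq _ s) => //; rewrite Hl; lia.
        right; right; exists (nth v s (index v s).+1).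
        apply: (theta_mid HC0 Us Hs3 Hm Hs vC Hv0); by rewrite ltn_neqAle Hv1 Hvi.
      * right; right.
        have Hc := comp_in a v.
        case: (Hcl _ Hc) => Hc'.
          exact: (uni_single Hc Hc' (comp_self a v)).
        have E := Huniq _ _ Hc HC0 Hc' (ex_intro _ s (And4 Us Hs3 Hm Hs)).
        by move: (comp_self a v); rewrite E (negbTE vC).
    have [f [Hf [Hfm Hfl]]] := exists_lab Hml HN.
    exists f; split => //.
    have [Hfi [Hfb _]] := Hf.
    have Wh := W_pair f HN Hor Oh Hml.
    have Wl := W_empty f HN Hor Ol.
    have Ws : forall v x, Out a v = [set x] -> 0 < weight a (pred1 1) f v <= #|V|.
      by move=> v x E; rewrite (W_single f HN Hor E) Hfb.
    rewrite Hfm Hfl in Wh.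
    move=> u v.
    case: (cls u) => [->|[->|[x Eu]]].
    * case: (cls v) => [->|[->|[x' Ev]]] //.
      - by rewrite Wh Wl; lia.
      - by have := Ws _ _ Ev;  rewrite Wh; lia.
    * case: (cls v) => [->|[->|[x' Ev]]] //.
      - by rewrite Wh Wl; lia.
      - by have := Ws _ _ Ev;  rewrite Wl; lia.
    case: (cls v) => [->|[->|[x' Ev]]] //.
      - by have := Ws _ _ Eu;  rewrite Wh; lia.
      - by have := Ws _ _ Eu;  rewrite Wl; lia.
    move=> Euv; exact: (ss_inj Hcl HN Hor Hfi Eu Ev Euv).
  + move=> Hno.
    have single : forall v, exists x, Out a v = [set x].
      move=> v; have Hc := comp_in a v.
      case: (Hcl _ Hc) => Hc'.
        exact: (uni_single Hc Hc' (comp_self a v)).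
      by case: Hno; exists (Defs.comp a v).
    exists (fun x => (enum_rank x).+1); split.
      by apply: (@lab_of V id id).
    move=> u v Euv.
    have [x Eu] := single u; have [x' Ev] := single v.
    apply: (ss_inj Hcl HN Hor _ Eu Ev Euv).
    by move=> p q [] /val_inj /enum_rank_inj.
Qed.
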